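(* For every integer $n\ge 0$, there exist two DFAs, each with at most $n+1$ states, over an alphabet of cardinality $\frac{n(n+1)}{2}+1$, such that there is a tower of height $2^{n}$ between their languages and there is no infinite tower between their languages.
   Context: For strings $v=a_1\cdots a_k$ and $w$, $v\preccurlyeq w$ if $w\in\Sigma^*a_1\Sigma^*a_2\Sigma^*\cdots\Sigma^*a_k\Sigma^*$. A sequence $(w_i)_{i=1}^r$ of strings is a tower between languages $K$ and $L$ if $w_1\in K\cup L$ and for all $i=1,\dots,r-1$: $w_i\preccurlyeq w_{i+1}$, $w_i\in K$ implies $w_{i+1}\in L$, and $w_i\in L$ implies $w_{i+1}\in K$; $r$ is its height. An infinite tower is an infinite sequence with the same properties. *)

(* Defs.v *)
From mathcomp Require Import all_boot.
Set Implicit Arguments. Unset Strict Implicit. Unset Printing Implicit Defensive.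

Record dfa (Sigma : finType) := DFA {
  dstate : finType;
  dinit : dstate;
  ddelta : dstate -> Sigma -> dstate;
  dfinal : {set dstate}
}.

Definition dfa_lang (Sigma : finType) (A : dfa Sigma) : seq Sigma -> bool :=
  fun w => foldl (@ddelta _ A) (dinit A) w \in dfinal A.

(* The scattered-subword order v ≼ w is MathComp's [subseq v w]. *)

(* A tower (w_1,...,w_r) between K and L, indexed from 0: w 0, ..., w (r-1). *)
Definition is_tower (Sigma : eqType) (K L : seq Sigma -> bool)
  (r : nat) (w : nat -> seq Sigma) : Prop :=
  (0 < r -> K (w 0) || L (w 0)) /\
  (forall i, i.+1 < r ->
     [/\ subseq (w i) (w i.+1),
         (K (w i) -> L (w i.+1)) &
         (L (w i) -> K (w i.+1))]).

Definition is_infinite_tower (Sigma : eqType) (K L : seq Sigma -> bool)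
  (w : nat -> seq Sigma) : Prop :=
  (K (w 0) || L (w 0)) /\
  (forall i,
     [/\ subseq (w i) (w i.+1),
         (K (w i) -> L (w i.+1)) &
         (L (w i) -> K (w i.+1))]).

(* Main.v *)
Require Import Defs.
From mathcomp Require Import all_boot.
From mathcomp Require Import zify.
Set Implicit Arguments. Unset Strict Implicit. Unset Printing Implicit Defensive.

Lemma decomp (T : eqType) (p : pred T) (s : seq T) : has p s ->
  exists x v, [/\ s = take (find p s) s ++ x :: v, p x & ~~ has p (take (find p s) s)].
Proof.
case: s => // y s' h.
have hf : find p (y :: s') < size (y :: s') by rewrite -has_find.
exists (nth y (y :: s') (find p (y :: s'))), (drop (find p (y :: s')).+1 (y :: s')).
split.
- by rewrite -drop_nth // cat_take_drop.
- exact: nth_find.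
- by rewrite has_take // ltnn.
Qed.

Lemma pre_subseq (T : eqType) (p : pred T) x x' v v' u' : forall u,
  p x -> p x' -> ~~ has p u -> ~~ has p v' ->
  subseq (u ++ x :: v) (u' ++ x' :: v') -> subseq u u'.
Proof.
elim: u' => [|z u'' IH] [|y u0] //= px px' /norP [py hu0] hv'.
- case: eqP => [e|_]; first by rewrite e px' in py.
  move/mem_subseq => /(_ x); rewrite in_cons mem_cat in_cons eqxx !orbT => /(_ isT) hx.
  by case/negP: hv'; apply/hasP; exists x.
- case: (y =P z) => [e|ne] h.
  + by apply: (IH u0) => //; rewrite hu0.
  + have := IH (y :: u0) px px' (negbT _) hv' h.
    by rewrite /= (negbTE py) (negbTE hu0) => /(_ erefl) ->; case: (y =P z).
Qed.

Lemma count1_tail (T : eqType) (p : pred T) u x v :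
  p x -> ~~ has p u -> count p (u ++ x :: v) = 1 -> ~~ has p v.
Proof.
move=> px; rewrite !has_count count_cat /= px -leqNgt leqn0 => /eqP ->.
by rewrite add0n add1n => -[->].
Qed.

Section Constr.
Variables (N m : nat).

Definition pk (k : nat) : pred 'I_N := fun i => nat_of_ord i == k.

Fixpoint g (k : nat) (w : seq 'I_N) : nat :=
  match k with
  | 0 => 0
  | k'.+1 =>
    let c := count (pk k') w in
    if c == 0 then g k' w
    else if c == 1 then 2 ^ k' + g k' (take (find (pk k') w) w)
    else 2 ^ k'.+1 - 1
  end.

Lemma g_lt k (w : seq 'I_N) : g k w < 2 ^ k.
Proof.
elim: k w => [|k IH] w //=.
case: ifP => _; first by have := IH w; rewrite expnS; lia.
case: ifP => _; last by have := expn_gt0 2 k.+1; lia.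
by have := IH (take (find (pk k) w) w); rewrite expnS; lia.
Qed.

Lemma g_mono k (w w' : seq 'I_N) : subseq w w' -> g k w <= g k w'.
Proof.
elim: k w w' => [|k IH] w w' //= h.
have hc := leq_count_subseq (pk k) h.
have hb := g_lt k.
case: ifP => [/eqP c0|c0].
  case: ifP => [_|c1]; first exact: IH.
  case: ifP => _; last by have := hb w; rewrite expnS; lia.
  by have := hb w; lia.
case: ifP => [/eqP c1|c1].
  case: ifP => [/eqP c0'|c0']; first by move: hc; rewrite c1 c0'.
  case: ifP => [/eqP c1'|c1']; last first.
    by have := hb (take (find (pk k) w) w); rewrite expnS; lia.
  rewrite leq_add2l; apply: IH.
  have hw : has (pk k) w by rewrite has_count c1.
  have hw' : has (pk k) w' by rewrite has_count c1'.
  have [x [v [ew px hu]]] := decomp hw.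
  have [x' [v' [ew' px' hu']]] := decomp hw'.
  apply: (pre_subseq px px' hu (u' := take (find (pk k) w') w') (v := v) (v' := v')).
    by apply: (count1_tail px' hu'); rewrite -ew'.
  by rewrite -ew -ew'.
have h2 : 1 < count (pk k) w'.
  by apply: leq_trans hc; case: (count (pk k) w) c0 c1 => [|[|c]].
by rewrite (gtn_eqF (ltnW h2)) (gtn_eqF h2).
Qed.

Definition delta (s : 'I_m.+1) (i : 'I_N) : 'I_m.+1 :=
  if (s == ord_max) || (m <= i) || (i < s) then s
  else if nat_of_ord i == nat_of_ord s then ord_max else inord i.

Lemma run_dead (w : seq 'I_N) : foldl delta ord_max w = ord_max.
Proof. by elim: w => //= i w IH; rewrite {2}/delta eqxx. Qed.

Lemma run_loop (s : 'I_m.+1) (w : seq 'I_N) : s != ord_max ->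
  (forall i, i \in w -> i < m -> i < s) -> foldl delta s w = s.
Proof.
elim: w => //= i w IH hs h.
have -> : delta s i = s.
  rewrite /delta; case: (leqP m i) => hi; rewrite ?orbT //.
  by rewrite h ?mem_head ?orbT.
by apply: IH => // j hj; apply: h; rewrite in_cons hj orbT.
Qed.

Lemma run_inv k (s : 'I_m.+1) (w : seq 'I_N) : k <= m ->
  (s < k) || (s == ord_max) -> (forall i, i \in w -> i < m -> i < k) ->
  (foldl delta s w < k) || (foldl delta s w == ord_max).
Proof.
move=> hk; elim: w s => //= i w IH s hs h.
apply: IH; last by move=> j hj; apply: h; rewrite in_cons hj orbT.
rewrite /delta; case: (s =P ord_max) => [->|ns] /=; first by rewrite eqxx orbT.
case: (leqP m i) => hi /=; first by [].
case: (ltnP i s) => his //=.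
case: eqP => _; first by rewrite eqxx orbT.
by rewrite inordK ?h ?mem_head //; apply: ltnW.
Qed.

Lemma run_kill k (s : 'I_m.+1) (w : seq 'I_N) : nat_of_ord s = k -> k < m ->
  (forall i, i \in w -> i < m -> i <= k) -> has (pk k) w -> foldl delta s w = ord_max.
Proof.
move=> hs hk; elim: w => //= i w IH h.
have hns : (s == ord_max) = false by apply/negbTE/eqP => e; move: hs; rewrite e /=; lia.
case hi: (pk k i) => /= hw.
  have -> : delta s i = ord_max.
    move: hi; rewrite /pk /delta => /eqP hi.
    by rewrite hns hi hs ltnn leqNgt hk /= eqxx.
  exact: run_dead.
have -> : delta s i = s.
  rewrite /delta hns; case: (leqP m i) => hi'; rewrite ?orbT //.
  have : i <= k by apply: h; rewrite ?mem_head.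
  rewrite leq_eqVlt => /orP [/eqP e|]; first by move: hi; rewrite /pk e eqxx.
  by rewrite hs => ->; rewrite !orbT.
by apply: IH => // j hj; apply: h; rewrite in_cons hj orbT.
Qed.


Lemma ord0_nmax : 0 < m -> (ord0 : 'I_m.+1) != ord_max.
Proof. by move=> hm; apply/eqP => /(congr1 val) /= e; move: hm; rewrite -e. Qed.

Lemma step_x k (u : seq 'I_N) (x : 'I_N) : k < m -> nat_of_ord x = k ->
  (forall i, i \in u -> i < m -> i < k) ->
  let s := foldl delta ord0 u in
  if (s != ord_max) && (0 < k) then delta s x = inord k else delta s x = ord_max.
Proof.
move=> hk hx hu /=.
case: k hk hx hu => [|k] hk hx hu.
  have e : foldl delta ord0 u = ord0.
    by apply: run_loop; [exact: ord0_nmax | move=> i hi him; have := hu i hi him].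
  rewrite e andbF.
  by rewrite /delta (negbTE (ord0_nmax _)) // hx /= leqn0 (gtn_eqF hk).
have := @run_inv k.+1 ord0 u (ltnW hk) isT hu.
set s := foldl delta ord0 u.
case: (s =P ord_max) => [->|ns] /=; first by rewrite /delta eqxx.
rewrite orbF => hs.
rewrite /delta; have -> : (s == ord_max) = false by apply/eqP.
by rewrite hx leqNgt hk /= ltnNge (ltnW hs) /= (gtn_eqF hs).
Qed.

Lemma accP (hm : 0 < m) k : k <= m -> forall w : seq 'I_N,
  (forall i, i \in w -> i < m -> i < k) ->
  (foldl delta ord0 w != ord_max) = ~~ odd (g k w).
Proof.
elim: k => [|k IH] hk w hw /=.
  by rewrite run_loop ?ord0_nmax.
have hkm : k < m by [].
case: ifP => [/eqP c0|c0].
  apply: IH; first exact: ltnW.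
  move=> i hi him; have := hw i hi him; rewrite ltnS leq_eqVlt => /orP [/eqP e|//].
  have : has (pk k) w by apply/hasP; exists i => //; rewrite /pk e.
  by rewrite has_count c0.
have hw1 : has (pk k) w by rewrite has_count lt0n c0.
have [x [v [ew px hu]]] := decomp hw1.
set u := take (find (pk k) w) w in ew hu.
have hul : forall i, i \in u -> i < m -> i < k.
  move=> i hi him; have := hw i; rewrite ew mem_cat hi => /(_ isT him).
  rewrite ltnS leq_eqVlt => /orP [/eqP e|//].
  by case/hasP: hu; exists i => //; rewrite /pk e.
have hx : nat_of_ord x = k by apply/eqP.
have := step_x hkm hx hul.
set s := foldl delta ord0 u.
have IHu := IH (ltnW hk) u hul.
rewrite -/s in IHu.
have hu0 : count (pk k) u = 0 by apply/eqP; rewrite -leqn0 leqNgt -has_count.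
have hcw : count (pk k) w = (count (pk k) v).+1.
  by rewrite {1}ew count_cat /= px hu0.
have hvl : forall i, i \in v -> i < m -> i <= k.
  by move=> i hi him; have := hw i; rewrite ew mem_cat in_cons hi !orbT => /(_ isT him).
case: ifP => [/eqP c1|c1].
  have hv : ~~ has (pk k) v by rewrite has_count -leqNgt leqn0 -eqSS -hcw c1.
  rewrite -/u {1}ew foldl_cat /= -/s oddD oddX /=.
  case: ifP => [/andP [ns k0] ->|nsk ->].
    rewrite run_loop.
    - have nm : (inord k : 'I_m.+1) != ord_max by apply/eqP => /(congr1 val); rewrite /= inordK //; lia.
      by rewrite nm (gtn_eqF k0) /= -IHu ns.
    - by apply/eqP => /(congr1 val); rewrite /= inordK //; lia.
    - move=> i hi him; rewrite inordK; last by lia.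
      have := hvl i hi him; rewrite leq_eqVlt => /orP [/eqP e|//].
      by case/hasP: hv; exists i => //; rewrite /pk e.
  rewrite run_dead /=.
  case: (posnP k) => [k0|k0].
    by rewrite k0 eqxx.
  by move: nsk; rewrite k0 andbT => /negbFE /eqP e; rewrite eqxx /= -IHu e eqxx.
have hv : has (pk k) v.
  by rewrite has_count lt0n; apply/negP => /eqP e; move: c1 c0; rewrite hcw e.
have -> : 2 ^ k.+1 - 1 = (2 ^ k - 1).*2.+1 by rewrite expnS -muln2; have := expn_gt0 2 k; lia.
rewrite /= odd_double /= {1}ew foldl_cat /= -/s.
case: ifP => _ ->; last by rewrite run_dead eqxx.
by rewrite (@run_kill k) ?eqxx //= inordK //; lia.
Qed.


Variable i0 : 'I_N.
Definition lt k : 'I_N := insubd i0 k.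

Lemma lt_val k : k < N -> nat_of_ord (lt k) = k.
Proof. by move=> hk; rewrite /lt val_insubd hk. Qed.

Fixpoint ruler k : seq 'I_N :=
  match k with 0 => [::] | k'.+1 => ruler k' ++ lt k' :: ruler k' end.

Lemma ruler_lt k : k <= N -> forall i, i \in ruler k -> i < k.
Proof.
elim: k => [|k IH] //= hk i.
rewrite mem_cat in_cons => /or3P [h|/eqP ->|h].
- by apply: leq_trans (IH (ltnW hk) i h) _.
- by rewrite lt_val.
- by apply: leq_trans (IH (ltnW hk) i h) _.
Qed.

Lemma size_ruler k : size (ruler k) = 2 ^ k - 1.
Proof.
elim: k => [|k IH] //=; rewrite size_cat /= IH expnS.
by have := expn_gt0 2 k; lia.
Qed.

Lemma drop_cat_le (T : Type) n (s1 s2 : seq T) : n <= size s1 ->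
  drop n (s1 ++ s2) = drop n s1 ++ s2.
Proof.
rewrite drop_cat leq_eqVlt => /orP [/eqP ->|->] //.
by rewrite ltnn subnn drop0 drop_size.
Qed.

Lemma count_ruler k n : k <= N -> count (pk k) (drop n (ruler k)) = 0.
Proof.
move=> hk; apply/eqP; rewrite -leqn0 leqNgt -has_count; apply/hasPn => y hy.
have := ruler_lt hk (mem_drop hy); rewrite /pk; lia.
Qed.

Lemma count_ruler0 k : k <= N -> count (pk k) (ruler k) = 0.
Proof. by move=> hk; have := count_ruler 0 hk; rewrite drop0. Qed.

Lemma g_suf k : k <= N -> forall i, i < 2 ^ k ->
  g k (drop (2 ^ k - 1 - i) (ruler k)) = i.
Proof.
elim: k => [|k IH] hk i hi; first by case: i hi.
have hkN : k <= N by apply: ltnW.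
have e2 := expnS 2 k; have p2 : 0 < 2 ^ k by rewrite expn_gt0.
have hx : nat_of_ord (lt k) = k by rewrite lt_val.
rewrite /=.
case: (ltnP i (2 ^ k)) => hik.
  rewrite drop_cat size_ruler.
  have -> : (2 ^ k.+1 - 1 - i < 2 ^ k - 1) = false by apply/negbTE; lia.
  have -> : 2 ^ k.+1 - 1 - i - (2 ^ k - 1) = (2 ^ k - 1 - i).+1 by lia.
  rewrite /= count_ruler // eqxx; exact: IH.
rewrite drop_cat_le ?size_ruler; last by lia.
set D := drop _ (ruler k).
have cD : count (pk k) D = 0 by rewrite count_ruler.
have hD : has (pk k) D = false by rewrite has_count cD.
rewrite count_cat /= cD count_ruler0 // /pk hx eqxx /=.
rewrite find_cat hD /= /pk hx eqxx addn0 take_size_cat //.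
have -> : D = drop (2 ^ k - 1 - (i - 2 ^ k)) (ruler k) by rewrite /D; congr drop; lia.
by rewrite IH //; lia.
Qed.

End Constr.

Lemma accK N m (hm : 0 < m) (w : seq 'I_N) :
  (foldl (@delta N m) ord0 w != ord_max) = ~~ odd (g m w).
Proof. by apply: accP => // i _ ->. Qed.

Lemma sub_drop (T : eqType) (s : seq T) j : j < size s -> subseq (drop j.+1 s) (drop j s).
Proof.
case: s => // y s' hj; rewrite (drop_nth y hj); exact: subseq_cons.
Qed.

Theorem theorem11 (n : nat) :
  exists A B : dfa 'I_((n * n.+1) %/ 2 + 1),
    [/\ #|dstate A| <= n.+1,
        #|dstate B| <= n.+1,
        (exists w, is_tower (dfa_lang A) (dfa_lang B) (2 ^ n) w) &
        ~ (exists w, is_infinite_tower (dfa_lang A) (dfa_lang B) w)].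
Proof.
case: n => [|n].
  exists (@DFA _ 'I_1 ord0 (fun s _ => s) setT).
  exists (@DFA _ 'I_1 ord0 (fun s _ => s) set0).
  split; rewrite ?card_ord //.
    by exists (fun _ => [::]); split => [_|i] //; rewrite /dfa_lang inE.
  case=> w [_ h]; have [_ hK _] := h 0.
  by have := hK; rewrite /dfa_lang !inE => /(_ isT).
set N := (n.+1 * n.+2) %/ 2 + 1.
have hN : 0 < N by rewrite /N addn1.
pose i0 : 'I_N := Ordinal hN.
have hmN : n.+1 <= N.
  rewrite /N addn1 ltnS leq_divRL //; nia.
pose A := @DFA _ 'I_n.+2 ord0 (@delta N n.+1) [set s | s != ord_max].
pose B := @DFA _ 'I_n.+2 ord0 (@delta N n.+1) [set s | s == ord_max].
have hA : forall w, dfa_lang A w = ~~ odd (g n.+1 w).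
  by move=> w; rewrite /dfa_lang inE /= accK.
have hB : forall w, dfa_lang B w = odd (g n.+1 w).
  by move=> w; rewrite /dfa_lang inE -[odd (g n.+1 w)]negbK -(accK (m:=n.+1)) // negbK.
exists A, B; split; rewrite ?card_ord //.
  exists (fun i => drop (2 ^ n.+1 - 1 - i) (ruler i0 n.+1)); split.
    by move=> _; rewrite hA hB orNb.
  move=> i hi; have p2 : 0 < 2 ^ n.+1 by rewrite expn_gt0.
  have e1 : g n.+1 (drop (2 ^ n.+1 - 1 - i) (ruler i0 n.+1)) = i by apply: g_suf => //; lia.
  have e2 : g n.+1 (drop (2 ^ n.+1 - 1 - i.+1) (ruler i0 n.+1)) = i.+1 by apply: g_suf.
  rewrite !hA !hB e1 e2; split; [|by move=> h /=; rewrite h|by move=> h /=; rewrite h].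
  have -> : 2 ^ n.+1 - 1 - i = (2 ^ n.+1 - 1 - i.+1).+1 by lia.
  by apply: sub_drop; rewrite size_ruler; lia.
case=> w [h0 h].
have key : forall i, i <= g n.+1 (w i).
  elim=> [|i IH] //; have [hs hK hL] := h i.
  have hm := g_mono n.+1 hs.
  have hne : g n.+1 (w i) != g n.+1 (w i.+1).
    apply/eqP => eq; move: hK hL; rewrite hA hB hA hB -eq.
    by case: (odd (g n.+1 (w i))) => [_ /(_ isT)|/(_ isT)].
  by apply: leq_ltn_trans IH _; rewrite ltn_neqAle hne hm.
have := key (2 ^ n.+1); have := g_lt n.+1 (w (2 ^ n.+1)); lia.
Qed.
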